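(* Let $G$ be a finite unipotent group scheme over an algebraically closed field $k$ of characteristic $p>0$, and suppose $A=kG$ has generators $u_1,\dots,u_n$ ($n>1$) satisfying Hypothesis H1. Then: (a) The set $\{u_1^{i_1}u_2^{i_2}\cdots u_n^{i_n} : 0\le i_j<p,\ j=1,\dots,n\}$ is a $k$-basis of $A$. (b) For each $s=1,\dots,n$, $J_s=Au_s+Au_{s+1}+\dots+Au_n$ is a two-sided ideal of $A$, and $x\,u_s^{p-1}u_{s+1}^{p-1}\cdots u_n^{p-1}=0$ for every $x\in J_s$. (c) Let $v=a_1u_1+\dots+a_nu_n$ with $a_1,\dots,a_n\in k$ and $a_i\neq 0$ for some $i<n$. If $v^p=0$, then $v^{p-1}u_n^{p-1}\neq 0$ (in particular $v^{p-1}\notin Au_n$), and the subalgebra of $A$ generated by $v$ and $u_n$ is isomorphic to $k[s,t]/(s^p,t^p)$ via $s\mapsto v$, $t\mapsto u_n$ (i.e. to the group algebra of an elementary abelian $p$-group of rank $2$).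
   Context: Hypothesis H1: $G$ is a finite unipotent group scheme and $A=kG$ is generated as a $k$-algebra by elements $u_1,\dots,u_n$, $n>1$, such that (a) $u_i^p=0$ for all $i$; (b) for each $i=1,\dots,n-1$ the image of $u_i$ is central in $A/I_i$, where $I_i$ is the two-sided ideal generated by $u_{i+1},\dots,u_n$; (c) $u_n$ is central in $A$; (d) $\dim_k A=p^n$. *)

(* Defs.v *)
From HB Require Import structures.
From mathcomp Require Import all_boot all_order all_algebra all_field.
Set Implicit Arguments. Unset Strict Implicit. Unset Printing Implicit Defensive.
Import GRing.Theory.
Local Open Scope ring_scope.

Definition ideal_gen (K : fieldType) (A : falgType K) (S : {vspace A}) :
  {vspace A} := (fullv * S * fullv)%VS.

Definition span_after (K : fieldType) (A : falgType K) (n : nat)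
  (u : 'I_n -> A) (i : nat) : {vspace A} :=
  <<[seq u j | j <- filter (fun j : 'I_n => (i < j)%N) (enum 'I_n)]>>%VS.

Definition span_from (K : fieldType) (A : falgType K) (n : nat)
  (u : 'I_n -> A) (i : nat) : {vspace A} :=
  <<[seq u j | j <- filter (fun j : 'I_n => (i <= j)%N) (enum 'I_n)]>>%VS.

Definition monomial (K : fieldType) (A : falgType K) (n p : nat)
  (u : 'I_n -> A) (e : {ffun 'I_n -> 'I_p}) : A :=
  \prod_(j < n) u j ^+ e j.

(* Evaluation k[s,t] -> A, s |-> x, t |-> y, where k[s,t] is encoded as
   {poly {poly K}}: the inner variable is s (written 'X%:P), the outer
   variable is t (written 'X). *)
Definition eval2 (K : fieldType) (A : falgType K) (x y : A)
  (P : {poly {poly K}}) : A :=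
  (map_poly (horner_alg x) P).[y].

(* Main.v *)
Require Import Defs.
From HB Require Import structures.
From mathcomp Require Import all_boot all_order all_algebra all_field.
From Stdlib Require Import Lia.
Import GRing.Theory.
Local Open Scope ring_scope.

Section Main.
Variables (K : fieldType) (p : nat) (A : falgType K) (n' : nat).
Local Notation n := n'.+1.
Variable (u : 'I_n -> A).
Hypothesis pprime : prime p.
Hypothesis up : forall i, u i ^+ p = 0.
Hypothesis hcomm : forall i : 'I_n, (i < n.-1)%N ->
     forall a : A, u i * a - a * u i \in ideal_gen (span_after u i).
Hypothesis hcent : forall i : 'I_n, val i = n.-1 -> forall a : A, u i * a = a * u i.

Local Notation S s := (span_from u s).
Local Notation J s := (fullv * span_from u s)%VS.

Lemma memS s (j : 'I_n) : (s <= j)%N -> u j \in S s.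
Proof.
move=> sj; rewrite /span_from; apply: memv_span; apply: map_f.
by rewrite mem_filter mem_enum sj.
Qed.

Lemma S_ge s : (n <= s)%N -> S s = 0%VS.
Proof.
move=> ns; rewrite /span_from.
rewrite (eq_filter (a2 := pred0)) ?filter_pred0 ?span_nil // => j /=.
by apply/negbTE; rewrite -ltnNge (leq_trans (ltn_ord j)).
Qed.

Lemma S_split s (Hs : (s < n)%N) : (S s <= <[u (Ordinal Hs)]> + S s.+1)%VS.
Proof.
apply/span_subvP => x /mapP [j]; rewrite mem_filter => /andP[sj _] ->.
move: sj; rewrite leq_eqVlt => /orP[/eqP sj | sj].
  have -> : j = Ordinal Hs by apply: val_inj; rewrite /= sj.
  by apply: (subvP (addvSl _ _)); apply: memv_line.
by apply: (subvP (addvSr _ _)); apply: memS.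
Qed.

Lemma S_mono s t : (s <= t)%N -> (S t <= S s)%VS.
Proof.
move=> st; apply/span_subvP => x /mapP [j]; rewrite mem_filter => /andP[tj _] ->.
by apply: memS; apply: leq_trans tj.
Qed.

Lemma S_sub_J s : (S s <= J s)%VS.
Proof. by rewrite -{1}(prod1v (S s)) prodvSl // subvf. Qed.

Lemma Jl s : (fullv * J s <= J s)%VS.
Proof. by rewrite prodvA prodvSl // subvf. Qed.

Lemma J_mono s t : (s <= t)%N -> (J t <= J s)%VS.
Proof. by move=> st; rewrite prodvSr // S_mono. Qed.

Lemma Jr s : (J s * fullv <= J s)%VS.
Proof.
suff H : forall d s, (n - s <= d)%N -> (J s * fullv <= J s)%VS by apply: (H _ _ (leqnn _)).
elim => [|d IH] {}s.
  by rewrite leqn0 subn_eq0 => ns; rewrite S_ge // prodv0 prod0v sub0v.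
move=> hd; case: (leqP n s) => [ns | Hs].
  by rewrite S_ge // prodv0 prod0v sub0v.
have IH1 : (J s.+1 * fullv <= J s.+1)%VS by apply: IH; rewrite subnS -ltnS prednK // subn_gt0.
rewrite -prodvA; apply: (subv_trans _ (Jl s)); apply: prodvSr.
apply: (subv_trans (prodvSl _ (S_split _ Hs))); rewrite prodvDl subv_add; apply/andP; split.
  apply/prodvP => x a /vlineP[c ->] _; rewrite -scalerAl memvZ //.
  have -> : u (Ordinal Hs) * a = a * u (Ordinal Hs) + (u (Ordinal Hs) * a - a * u (Ordinal Hs)).
    by rewrite addrC subrK.
  apply: memvD; first by apply: memv_mul; [apply: memvf | apply: memS].
  case: (ltnP s n.-1) => hsn.
    have := @hcomm (Ordinal Hs) hsn a; rewrite /ideal_gen.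
    move=> /(subvP IH1).
    by apply: (subvP (J_mono _ _ (leqnSn s))).
  have hsn' : s = n.-1 by apply/eqP; rewrite eqn_leq hsn -ltnS prednK // (leq_ltn_trans _ Hs).
  by rewrite (hcent (Ordinal Hs) hsn') subrr mem0v.
apply: (subv_trans (prodvSl _ (S_sub_J _))); apply: (subv_trans IH1).
exact: J_mono.
Qed.

Lemma Jr_mem s x a : x \in J s -> x * a \in J s.
Proof. by move=> Hx; apply: (subvP (Jr s)); apply: memv_mul => //; apply: memvf. Qed.

Lemma J_split s (Hs : (s < n)%N) : (J s <= fullv * <[u (Ordinal Hs)]> + J s.+1)%VS.
Proof. by rewrite -prodvDr prodvSr // S_split. Qed.

Lemma pgt0 : (0 < p)%N. Proof. exact: prime_gt0. Qed.

Lemma Zb s x : x \in J s -> x * \prod_(s <= j < n) u (inord j) ^+ p.-1 = 0.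
Proof.
suff H : forall d s x, (n - s <= d)%N -> x \in J s ->
   x * \prod_(s <= j < n) u (inord j) ^+ p.-1 = 0 by apply: (H _ _ _ (leqnn _)).
elim => [|d IH] {}s {}x.
  by rewrite leqn0 subn_eq0 => ns; rewrite S_ge // prodv0 memv0 => /eqP ->; rewrite mul0r.
move=> hd; case: (leqP n s) => [ns | Hs].
  by rewrite S_ge // prodv0 memv0 => /eqP ->; rewrite mul0r.
move/(subvP (J_split _ Hs)) => /memv_addP [x1 Hx1 [x2 Hx2 ->]].
rewrite big_ltn // mulrDl; have -> : inord s = Ordinal Hs :> 'I_n by apply: val_inj; rewrite /= inordK.
case/memv_cosetP: Hx1 => b _ ->.
rewrite mulrA -(mulrA b) -exprS prednK ?pgt0 // up mulr0 mul0r add0r.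
rewrite mulrA; apply: IH; first by rewrite subnS -ltnS prednK // subn_gt0.
exact: Jr_mem.
Qed.

Definition isup s (e : {ffun 'I_n -> 'I_p}) :=
  [forall j : 'I_n, (s <= j)%N ==> (e j == 0 :> nat)].
Definition M s := <<[seq monomial u e | e <- [seq e <- enum {ffun 'I_n -> 'I_p} | isup s e]]>>%VS.

Lemma prod_cut (F : 'I_n -> A) k : (k <= n)%N -> (forall t : 'I_n, (k <= t)%N -> F t = 1) ->
  \prod_(t < n) F t = \prod_(i < k) F (inord i).
Proof.
move=> kn H; rewrite (big_ord_widen n (fun i => F (inord i)) kn) [RHS]big_mkcond /=.
apply: eq_bigr => t _; rewrite inord_val; case: ifP => // /negbT; rewrite -leqNgt.
by move/H.
Qed.

Lemma mon_ext s (Hs : (s < n)%N) e j (Hj : (j < p)%N) : isup s e ->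
  monomial u e * u (Ordinal Hs) ^+ j
    = monomial u [ffun t : 'I_n => if val t == s then Ordinal Hj else e t]
  /\ isup s.+1 [ffun t : 'I_n => if val t == s then Ordinal Hj else e t].
Proof.
move=> /forallP He; split; last first.
  apply/forallP => t; apply/implyP => st; rewrite ffunE (gtn_eqF st).
  by have := He t; rewrite (ltnW st).
rewrite /monomial (prod_cut _ s) ?(ltnW Hs) //; last first.
  by move=> t st; have := He t; rewrite st /= => /eqP ->; rewrite expr0.
rewrite [RHS](prod_cut _ s.+1) //; last first.
  move=> t st; rewrite ffunE (gtn_eqF st); have := He t; rewrite (ltnW st) /=.
  by move/eqP ->; rewrite expr0.
rewrite big_ord_recr /=; congr (_ * _).
  apply: eq_bigr => i _; rewrite ffunE inordK ?(ltn_trans (ltn_ord i) Hs) //.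
  by rewrite (ltn_eqF (ltn_ord i)).
rewrite ffunE inordK // eqxx /=; congr (u _ ^+ _); apply: val_inj; rewrite /= inordK //.
Qed.

Definition z0 : 'I_p := Ordinal pgt0.

Lemma M0 : (1 <= M 0)%VS.
Proof.
rewrite -memvE; have -> : (1 : A) = monomial u [ffun _ => z0].
  by rewrite /monomial big1 // => t _; rewrite ffunE expr0.
apply: memv_span; apply: map_f; rewrite mem_filter mem_enum andbT.
by apply/forallP => t; rewrite ffunE.
Qed.

Lemma S0 : <<[seq u i | i <- enum 'I_n]>>%VS = S 0.
Proof. by rewrite /span_from (eq_filter (a2 := predT)) ?filter_predT. Qed.

Lemma C0 : agenv <<[seq u i | i <- enum 'I_n]>>%VS = fullv -> (fullv <= M 0 + J 0)%VS.
Proof.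
move=> hgen; rewrite -[X in (X <= _)%VS]hgen; apply: agenv_sub_modl.
  exact: (subv_trans M0 (addvSl _ _)).
apply: (subv_trans _ (addvSr _ _)); rewrite S0.
apply: (subv_trans (prodvS (S_sub_J 0) (subvf _))); exact: Jr.
Qed.

Lemma Cstep s (Hs : (s < n)%N) : (fullv <= M s + J s)%VS -> (fullv <= M s.+1 + J s.+1)%VS.
Proof.
move=> Cs; set w := u (Ordinal Hs).
have Mw : forall j, (j < p)%N -> (M s * <[w ^+ j]> <= M s.+1)%VS.
  move=> j Hj; rewrite -limg_amulr limg_span; apply/span_subvP => x /mapP[y /mapP[e]].
  rewrite mem_filter => /andP[He _] -> ->; rewrite lfunE /=.
  have [-> Hsup] := @mon_ext s Hs e j Hj He.
  by apply: memv_span; apply: map_f; rewrite mem_filter Hsup mem_enum.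
have Ms : (M s <= M s.+1)%VS by have := Mw 0%N pgt0; rewrite expr0 prodv1.
have base : forall k, (p <= k)%N -> (fullv * <[w ^+ k]> <= M s.+1 + J s.+1)%VS.
  move=> k pk; rewrite -(subnKC pk) exprD up mul0r.
  by apply/prodvP => x y _ /vlineP[c ->]; rewrite scaler0 mulr0 mem0v.
have T : forall d k, (p - k <= d)%N -> (fullv * <[w ^+ k]> <= M s.+1 + J s.+1)%VS.
  elim => [|d IH] k.
    by rewrite leqn0 subn_eq0; apply: base.
  move=> hd; case: (leqP p k) => pk; first exact: base.
  apply: (subv_trans (prodvSl _ Cs)); rewrite prodvDl subv_add; apply/andP; split.
    exact: (subv_trans (Mw _ pk) (addvSl _ _)).
  apply: (subv_trans (prodvSl _ (J_split _ Hs))); rewrite prodvDl subv_add; apply/andP; split.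
    rewrite -prodvA prodv_line -exprS; apply: IH.
    by rewrite subnS -ltnS prednK ?subn_gt0.
  apply: (subv_trans (prodvSr _ (subvf _))); exact: (subv_trans (Jr _) (addvSr _ _)).
apply: (subv_trans Cs); rewrite subv_add (subv_trans Ms (addvSl _ _)) /=.
apply: (subv_trans (J_split _ Hs)); rewrite subv_add addvSr andbT.
by have := T _ 1%N (leqnn _); rewrite expr1.
Qed.

Lemma Cn : agenv <<[seq u i | i <- enum 'I_n]>>%VS = fullv ->
  (fullv <= <<[seq monomial u e | e <- enum {ffun 'I_n -> 'I_p}]>>)%VS.
Proof.
move=> hgen.
have H : forall s, (s <= n)%N -> (fullv <= M s + J s)%VS.
  elim => [|s IH] hs; first exact: C0.
  by apply: (@Cstep s hs); apply: IH; apply: ltnW.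
have := H n (leqnn _); rewrite S_ge // prodv0 addv0 => h.
apply: (subv_trans h); apply: sub_span => x /mapP[e]; rewrite mem_filter => /andP[_ He] ->.
exact: map_f.
Qed.

Lemma prod_conv s : \prod_(j < n | (s <= j)%N) u j ^+ p.-1 = \prod_(s <= j < n) u (inord j) ^+ p.-1.
Proof.
rewrite big_geq_mkord; apply: eq_big => [j | j _]; first by [].
by rewrite inord_val.
Qed.

Hypothesis hgen : agenv <<[seq u i | i <- enum 'I_n]>>%VS = fullv.
Hypothesis hdim : \dim (fullv : {vspace A}) = (p ^ n)%N.

Lemma basis_mon : basis_of fullv [seq monomial u e | e <- enum {ffun 'I_n -> 'I_p}].
Proof.
rewrite basisEdim Cn // size_map -cardE card_ffun !card_ord hdim; exact: leqnn.
Qed.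

Lemma c1 (a : 'I_n -> K) : (exists i : 'I_n, (i < n.-1)%N /\ a i != 0) ->
  exists m : 'I_n, [/\ (m < n.-1)%N, a m != 0 & forall i : 'I_n, (i < m)%N -> a i = 0].
Proof.
move=> ex; have ex' : exists k, (k < n.-1)%N && (a (inord k) != 0).
  by case: ex => i [Hi Ha]; exists i; rewrite Hi inord_val.
case: (ex_minnP ex') => k /andP[Hk Ha] Hmin.
exists (inord k); rewrite inordK ?(ltn_trans Hk (ltnSn _)) //; split => // i Hi.
apply/eqP/negPn/negP => Hai.
have := Hmin i; rewrite inord_val Hai andbT (ltn_trans Hi Hk) => /(_ isT).
by rewrite leqNgt Hi.
Qed.

Lemma c3 (c : K) (x y : A) s : y \in J s -> forall k,
  exists2 z, z \in J s & (c *: x + y) ^+ k = c ^+ k *: x ^+ k + z.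
Proof.
move=> Hy; elim => [|k [z Hz E]].
  by exists 0; rewrite ?mem0v // !expr0 scale1r addr0.
exists (c ^+ k *: (x ^+ k * y) + z * (c *: x + y)).
  apply: memvD; last exact: Jr_mem.
  by apply: memvZ; apply: (subvP (Jl s)); apply: memv_mul => //; apply: memvf.
rewrite exprSr E mulrDl mulrDr -!addrA; congr (_ + _).
  by rewrite -scalerAl -scalerAr scalerA -exprSr -exprSr.
by rewrite -scalerAl.
Qed.

Lemma cmain (a : 'I_n -> K) (w : 'I_n) : val w = n.-1 ->
  (exists i : 'I_n, (i < n.-1)%N /\ a i != 0) ->
  (\sum_(i < n) a i *: u i) ^+ p.-1 * u w ^+ p.-1 != 0.
Proof.
move=> Hw hex; have [m [Hm Ham Hlt]] := @c1 a hex.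
set v := \sum_(i < n) a i *: u i.
have Hy : v - a m *: u m \in J m.+1.
  apply: (subvP (S_sub_J _)).
  rewrite /v (bigD1 m) //= addrAC subrr add0r; apply: memv_suml => i Him.
  case: (ltngtP i m) => Hii.
  - by rewrite Hlt // scale0r mem0v.
  - by apply: memvZ; apply: memS.
  - by move: Him; rewrite -val_eqE /= Hii eqxx.
have [z Hz Ev] := @c3 (a m) (u m) _ _ Hy p.-1.
rewrite addrC subrK in Ev.
set F := fun j => u (inord j) ^+ p.-1.
have Zz : z * \prod_(m.+1 <= j < n) F j = 0 by apply: Zb.
have Hmon : v ^+ p.-1 * \prod_(m.+1 <= j < n) F j = a m ^+ p.-1 *: \prod_(m <= j < n) F j.
  by rewrite Ev mulrDl Zz addr0 -scalerAl [in RHS]big_ltn // /F inord_val.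
have Hne : \prod_(m <= j < n) F j != 0.
  have Hp1 : (p.-1 < p)%N by rewrite prednK ?pgt0.
  have -> : \prod_(m <= j < n) F j =
     monomial u [ffun j : 'I_n => if (m <= j)%N then Ordinal Hp1 else z0].
    rewrite /monomial -prod_conv big_mkcond /=; apply: eq_bigr => j _.
    by rewrite ffunE; case: ifP => _; rewrite ?expr0.
  apply: (free_not0 (basis_free basis_mon)); apply: map_f; exact: mem_enum.
apply/negP => /eqP H0; move: Hne; rewrite -(inj_eq (scalerI (expf_neq0 p.-1 Ham))) scaler0.
rewrite -Hmon.
have -> : \prod_(m.+1 <= j < n) F j = (\prod_(m.+1 <= j < n.-1) F j) * u w ^+ p.-1.
  rewrite /= big_nat_recr //= /F; congr (_ * _); congr (u _ ^+ _); apply: val_inj.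
  by rewrite /= inordK // Hw.
have hc : GRing.comm (\prod_(m.+1 <= j < n.-1) F j) (u w ^+ p.-1).
  by apply: commrX; rewrite /GRing.comm hcent.
by rewrite hc mulrA H0 mul0r eqxx.
Qed.

End Main.





Lemma span_mul (K : fieldType) (A : falgType K) (X Y : seq A) (W : {vspace A}) :
  (forall a b, a \in X -> b \in Y -> a * b \in W) -> (<<X>> * <<Y>> <= W)%VS.
Proof.
move=> H; apply/prodvP => a b Ha Hb.
rewrite (coord_span (X := in_tuple X) Ha) (coord_span (X := in_tuple Y) Hb) mulr_suml.
apply: memv_suml => i _; rewrite mulr_sumr; apply: memv_suml => j _.
rewrite -scalerAl -scalerAr !memvZ // H // mem_nth //.
Qed.

Lemma agenv_mul (K : fieldType) (A : falgType K) (V : {vspace A}) a b :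
  a \in agenv V -> b \in agenv V -> a * b \in agenv V.
Proof. by move=> Ha Hb; rewrite -agenvM; apply: memv_mul. Qed.

Lemma agenv_1 (K : fieldType) (A : falgType K) (V : {vspace A}) : 1 \in agenv V.
Proof. by rewrite memvE sub1_agenv. Qed.


Lemma size_map_le (R S : nzSemiRingType) (f : R -> S) (q : {poly R}) :
  f 0 = 0 -> (size (map_poly f q) <= size q)%N.
Proof.
move=> f0; apply/leq_sizeP => j hj; rewrite coef_map_id0 //.
by rewrite nth_default.
Qed.
Arguments size_map_le {R S f q}.


Lemma sum_delta (R : nmodType) m j (X : R) : (j < m)%N ->
  \sum_(i < m) (if (i == j :> nat) then X else 0) = X.
Proof.
move=> Hj; rewrite (bigD1 (Ordinal Hj)) //= eqxx big1 ?addr0 // => i.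
by rewrite -val_eqE /= => /negbTE ->.
Qed.

Ltac arith := (repeat match goal with | H : is_true (_ <= _)%N |- _ => move/leP: H => H end);
  apply/leP; rewrite -?plusE -?minusE; lia.

Section Eval.
Variables (K : fieldType) (A : falgType K) (x y : A).
Hypothesis ycent : forall a : A, y * a = a * y.
Local Notation E := (eval2 x y).

Lemma E_add P Q : E (P + Q) = E P + E Q.
Proof. by rewrite /eval2 rmorphD hornerD. Qed.
Lemma E_0 : E 0 = 0.
Proof. by rewrite /eval2 rmorph0 horner0. Qed.
Lemma E_mul P Q : E (P * Q) = E P * E Q.
Proof. by rewrite /eval2 rmorphM hornerM_comm //; rewrite /comm_poly ycent. Qed.
Lemma E_C q : E q%:P = horner_alg x q.
Proof. by rewrite /eval2 map_polyC hornerC. Qed.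
Lemma E_1 : E 1 = 1.
Proof. by rewrite /eval2 rmorph1 hornerC. Qed.
Lemma E_s : E ('X%:P) = x.
Proof. by rewrite E_C horner_algX. Qed.
Lemma E_t : E 'X = y.
Proof. by rewrite /eval2 map_polyX hornerX. Qed.
Lemma E_scale c P : E (c%:P%:P * P) = c *: E P.
Proof. by rewrite E_mul E_C horner_algC mulr_algl. Qed.
Lemma E_X P k : E (P ^+ k) = E P ^+ k.
Proof. by elim: k => [|k IH]; rewrite ?expr0 ?E_1 // !exprS E_mul IH. Qed.
Lemma E_sum I (r : seq I) (F : I -> {poly {poly K}}) :
  E (\sum_(i <- r) F i) = \sum_(i <- r) E (F i).
Proof. exact: (big_morph E E_add E_0). Qed.
Lemma E_mono i j : E (('X%:P) ^+ i * 'X ^+ j) = x ^+ i * y ^+ j.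
Proof. by rewrite E_mul !E_X E_s E_t. Qed.

Variable p : nat.
Hypothesis pgt0 : (0 < p)%N.
Hypothesis xp : x ^+ p = 0.
Hypothesis yp : y ^+ p = 0.

Lemma horner_alg_mem (q : {poly K}) : horner_alg x q \in agenv <<[:: x; y]>>%VS.
Proof.
elim/poly_ind: q => [|q c IH]; first by rewrite rmorph0 mem0v.
rewrite rmorphD rmorphM /= horner_algX horner_algC; apply: memvD.
  apply: agenv_mul => //; apply: (subvP (sub_agenv _)); apply: memv_span; exact: mem_head.
by have -> : c%:A = c *: (1 : A) by []; rewrite memvZ ?agenv_1.
Qed.

Lemma E_mem P : E P \in agenv <<[:: x; y]>>%VS.
Proof.
elim/poly_ind: P => [|P c IH]; first by rewrite E_0 mem0v.
rewrite E_add E_mul // E_t E_C; apply: memvD; last exact: horner_alg_mem.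
apply: agenv_mul => //; apply: (subvP (sub_agenv _)); apply: memv_span.
by rewrite !inE eqxx orbT.
Qed.

Definition Ps := [seq ('X%:P) ^+ i * 'X ^+ j | i <- iota 0 p, j <- iota 0 p] : seq {poly {poly K}}.

Lemma memW i j : x ^+ i * y ^+ j \in <<map E Ps>>%VS.
Proof.
case: (ltnP i p) => Hi; last by rewrite -(subnKC Hi) exprD xp !mul0r mem0v.
case: (ltnP j p) => Hj; last by rewrite -(subnKC Hj) exprD yp mul0r mulr0 mem0v.
apply: memv_span; rewrite -E_mono; apply: map_f.
by apply: allpairs_f; rewrite mem_iota.
Qed.

Lemma image_E z : z \in agenv <<[:: x; y]>>%VS <-> exists P, E P = z.
Proof.
split; last by case=> P <-; exact: E_mem.
have : (agenv <<[:: x; y]>> <= <<map E Ps>>)%VS.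
  apply: agenv_sub_modl.
    by rewrite -memvE -(mulr1 1) -{1}(expr0 x) -(expr0 y) memW.
  apply: span_mul => a b; rewrite in_cons mem_seq1 => /orP[/eqP -> | /eqP ->].
    case/mapP => P /allpairsP [[i j] /= [_ _ ->]] ->.
    by rewrite E_mono // mulrA -exprS memW.
  case/mapP => P /allpairsP [[i j] /= [_ _ ->]] ->.
  by rewrite E_mono // mulrA ycent -mulrA -exprS memW.
move/subvP => H /H Hz.
rewrite (coord_span (X := in_tuple (map E Ps)) Hz).
exists (\sum_i (coord (in_tuple (map E Ps)) i z)%:P%:P * Ps`_i).
rewrite E_sum; apply: eq_bigr => i _; rewrite E_scale //; congr (_ *: _).
rewrite /= (nth_map 0) //; by rewrite -(size_map E) (ltn_ord i).
Qed.

Hypothesis nz : x ^+ p.-1 * y ^+ p.-1 != 0.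

Lemma indep (c : nat -> nat -> K) :
  \sum_(j < p) \sum_(i < p) c i j *: (x ^+ i * y ^+ j) = 0 ->
  forall i j, (i < p)%N -> (j < p)%N -> c i j = 0.
Proof.
move=> H0.
suff H : forall d i j, (i + j < d)%N -> (i < p)%N -> (j < p)%N -> c i j = 0.
  by move=> i j; apply: H (ltnSn _).
have Hx : forall k, (p <= k)%N -> x ^+ k = 0.
  by move=> k pk; rewrite -(subnKC pk) exprD xp mul0r.
have Hy : forall k, (p <= k)%N -> y ^+ k = 0.
  by move=> k pk; rewrite -(subnKC pk) exprD yp mul0r.
elim => [|d IH] i j //.
rewrite ltnS leq_eqVlt => /orP[/eqP Hd | Hd] Hi Hj; last exact: IH.
subst d.
have Hi' : (i <= p.-1)%N by rewrite -ltnS prednK.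
have Hj' : (j <= p.-1)%N by rewrite -ltnS prednK.
have := congr1 (fun z => x ^+ (p.-1 - i) * z * y ^+ (p.-1 - j)) H0.
rewrite /= mulr0 mul0r mulr_sumr mulr_suml.
rewrite (eq_bigr (fun j' : 'I_p => if (j' == j :> nat) then c i j *: (x ^+ p.-1 * y ^+ p.-1) else 0)).
  rewrite sum_delta // => /eqP; rewrite scaler_eq0 (negbTE nz) orbF.
  by move/eqP.
move=> j' _; rewrite mulr_sumr mulr_suml.
rewrite (eq_bigr (fun i' : 'I_p => if (i' == i :> nat) then
          (if (j' == j :> nat) then c i j *: (x ^+ p.-1 * y ^+ p.-1) else 0) else 0)).
  by rewrite sum_delta.
move=> i' _.
have -> : x ^+ (p.-1 - i) * (c i' j' *: (x ^+ i' * y ^+ j')) * y ^+ (p.-1 - j)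
          = c i' j' *: (x ^+ (p.-1 - i + i') * y ^+ (j' + (p.-1 - j))).
  by rewrite -scalerAr -scalerAl !mulrA -exprD -mulrA -exprD.
have pp : p = p.-1.+1 by rewrite prednK.
case: (ltngtP i' i) => Hii.
- case: (leqP j' j) => Hjj.
    by rewrite IH ?scale0r ?ltn_ord //; arith.
  by rewrite Hy ?mulr0 ?scaler0 //; arith.
- by rewrite Hx ?mul0r ?scaler0 //; arith.
rewrite Hii subnK //; case: (ltngtP j' j) => Hjj.
- by rewrite IH ?scale0r ?ltn_ord //; arith.
- by rewrite Hy ?mulr0 ?scaler0 //; arith.
by rewrite Hjj addnC subnK.
Qed.

Lemma horner_alg_wide (q : {poly K}) : (size q <= p)%N ->
  horner_alg x q = \sum_(i < p) q`_i *: x ^+ i.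
Proof.
move=> hq; rewrite /horner_alg /horner_morph /=.
rewrite (horner_coef_wide _ (leq_trans (size_map_le (rmorph0 _)) hq)).
by apply: eq_bigr => i _; rewrite coef_map /= mulr_algl.
Qed.

Lemma kernel_E P : E P = 0 <-> exists Q R, P = Q * ('X%:P) ^+ p + R * 'X ^+ p.
Proof.
split; last first.
  by case=> Q [R ->]; rewrite E_add !E_mul !E_X E_s E_t xp yp !mulr0 addr0.
set P1 := take_poly p P; set R := drop_poly p P.
set P0 := map_poly (take_poly p) P1; set Q := map_poly (drop_poly p) P1.
have eP1 : P1 = P0 + Q * ('X ^+ p)%:P.
  apply/polyP => k; rewrite coefD coefMC !coef_map_id0 ?take_poly0r ?drop_poly0r //.
  by rewrite poly_take_drop.
have eP : P = P0 + Q * ('X%:P) ^+ p + R * 'X ^+ p.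
  by rewrite -[LHS](poly_take_drop p) -/P1 eP1 rmorphXn.
rewrite eP !E_add !E_mul !E_X E_s E_t xp yp !mulr0 !addr0 => HE.
exists Q, R; suff -> : P0 = 0 by rewrite add0r.
have sP1 : (size P1 <= p)%N by apply: size_take_poly.
have sP0 : (size P0 <= p)%N by apply: leq_trans (size_map_le (take_poly0r _ _)) sP1.
have c0 : forall i j, (i < p)%N -> (j < p)%N -> P0`_j`_i = 0.
  apply: (@indep (fun i j => P0`_j`_i)); rewrite -[X in _ = X]HE /eval2.
  rewrite (horner_coef_wide _ (leq_trans (size_map_le (rmorph0 _)) sP0)).
  apply: eq_bigr => j _; rewrite [in RHS]coef_map /= horner_alg_wide; last first.
    by rewrite coef_map_id0 ?take_poly0r // size_take_poly.
  by rewrite mulr_suml; apply: eq_bigr => i _; rewrite scalerAl.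
apply/polyP => j; rewrite coef0; apply/polyP => i; rewrite coef0.
case: (ltnP j p) => Hj; last first.
  have HP1 : P1`_j = 0 by rewrite /P1 coef_take_poly ltnNge Hj.
  by rewrite /P0 coef_map_id0 ?take_poly0r // HP1 take_poly0r coef0.
case: (ltnP i p) => Hi; first exact: c0.
by rewrite /P0 coef_map_id0 ?take_poly0r // coef_take_poly ltnNge Hi.
Qed.

End Eval.

Theorem lemma4p2 (K : closedFieldType) (p : nat) (A : falgType K)
    (n : nat) (u : 'I_n -> A) :
  p \in [pchar K] ->
  (1 < n)%N ->
  (* A is generated as a K-algebra by u_1, ..., u_n *)
  agenv <<[seq u i | i <- enum 'I_n]>>%VS = fullv ->
  (* H1 (a) *)
  (forall i, u i ^+ p = 0) ->
  (* H1 (b): u_i central modulo the two-sided ideal I_i gen. by u_{i+1},...,u_n *)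
  (forall i : 'I_n, (i < n.-1)%N ->
     forall a : A, u i * a - a * u i \in ideal_gen (span_after u i)) ->
  (* H1 (c): u_n central *)
  (forall i : 'I_n, val i = n.-1 -> forall a : A, u i * a = a * u i) ->
  (* H1 (d) *)
  \dim (fullv : {vspace A}) = (p ^ n)%N ->
  (* (a) *)
  basis_of fullv [seq monomial u e | e <- enum {ffun 'I_n -> 'I_p}]
  /\
  (* (b) *)
  (forall s : nat, (s < n)%N ->
     ((fullv * (fullv * span_from u s) <= fullv * span_from u s)%VS
      /\ ((fullv * span_from u s) * fullv <= fullv * span_from u s)%VS)
     /\ forall x, x \in (fullv * span_from u s)%VS ->
          x * \prod_(j < n | (s <= j)%N) u j ^+ p.-1 = 0)
  /\
  (* (c) *)
  (forall (a : 'I_n -> K) (w : 'I_n), val w = n.-1 ->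
     let v := \sum_(i < n) a i *: u i in
     (exists i : 'I_n, (i < n.-1)%N /\ a i != 0) ->
     v ^+ p = 0 ->
     [/\ v ^+ p.-1 * u w ^+ p.-1 != 0,
         v ^+ p.-1 \notin (fullv * <[u w]>)%VS,
         (* the evaluation map k[s,t] -> A, s |-> v, t |-> u_n, is a
            K-algebra morphism ... *)
         eval2 v (u w) 1 = 1
           /\ (forall (c : K) (P Q : {poly {poly K}}),
                 eval2 v (u w) (c%:P%:P * P + Q)
                   = c *: eval2 v (u w) P + eval2 v (u w) Q
                 /\ eval2 v (u w) (P * Q) = eval2 v (u w) P * eval2 v (u w) Q),
         (* ... whose image is the subalgebra generated by v and u_n ... *)
         (forall x : A, x \in agenv <<[:: v; u w]>>%VS <->
                          exists P, eval2 v (u w) P = x)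
       & (* ... and whose kernel is the ideal (s^p, t^p). *)
         (forall P : {poly {poly K}}, eval2 v (u w) P = 0 <->
            exists Q R : {poly {poly K}},
              P = Q * ('X%:P) ^+ p + R * 'X ^+ p)]).
Proof.
move=> pch n1 hgen up hcomm hcent hdim.
have pprime := pcharf_prime pch.
destruct n as [|n']; first by [].
split; first by apply: basis_mon.
split.
  move=> s hs; split; first by split; [exact: Jl | apply: Jr].
  move=> x hx; rewrite prod_conv; exact: Zb.
move=> a w Hw v hex vp.
have H1 : v ^+ p.-1 * u w ^+ p.-1 != 0 by apply: cmain.
have yc := hcent w Hw.
have pg : (0 < p)%N by apply: prime_gt0.
split => //.
- apply/negP => /memv_cosetP[b _ Hb]; move/negP: H1; apply.
  by rewrite Hb -mulrA -exprS prednK // up mulr0.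
- split; first exact: E_1.
  move=> c P Q; split; first by rewrite E_add (E_scale _ _ _ _ yc).
  exact: (E_mul _ _ _ _ yc).
- by move=> z; apply: (image_E _ _ _ _ yc _ vp (up w)).
by move=> P; apply: (kernel_E _ _ _ _ yc _ pg vp (up w) H1).
Qed.
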